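(* With notation as in the context, fix distinct $i,j\in\{1,\dots,2r\}$ and let $\rho\in A_1^{[1]}$. Let $u_k=c_k^{\rho}$ ($1\le k\le 8$) be the vertices of the image cycle $C_{ij}^\rho$, and define $a_1,\dots,a_8\in S$ by $u_{k+1}=a_ku_k$ for $1\le k\le 7$ and $u_1=a_8u_8$ (so $a_1=g_i$, $a_8=g_j$). If $z^{\rho}\neq z$, then each element of $S$ that occurs in $(a_1,\dots,a_8)$ occurs exactly twice, the elements $a_1,a_2,a_3,a_4$ are pairwise distinct, and the elements $a_5,a_6,a_7,a_8$ are pairwise distinct.
   Context: Let $r\ge1$ and $G$ an extraspecial $2$-group of order $2^{2r+1}$ (i.e. $|Z(G)|=2$, $G/Z(G)\cong\mathbb{Z}_2^{2r}$), $Z=Z(G)=\langle z\rangle$ identified with $\mathbb{F}_2$, $G/Z$ with quadratic form $Q(Zx)=x^2$ and bilinear form $B(Zx,Zy)=[x,y]$. Assume $\{Zg_1,\dots,Zg_{2r}\}$ is a symmetric basis of $G/Z$ ($Q(Zg_i)=0$, $B(Zg_i,Zg_j)=1$ for $i\ne j$), so $g_i^2=1$ and $g_ig_j=g_jg_iz$ for $i\ne j$. $S=\{g_1,\dots,g_{2r}\}$, $\Gamma=\mathrm{Cay}(G,S)$ (vertex set $G$, edges $\{x,sx\}$), $A=\mathrm{Aut}(\Gamma)$, $N(v)$ the set of neighbours of $v$ (so $N(1)=S$), and $A_v^{[1]}$ the subgroup of $A$ fixing $v$ and every vertex of $N(v)$. For distinct $i,j$, $C_{ij}$ is the $8$-cycle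 with vertices $c_1=1$ and $c_k=s_{k-1}s_{k-2}\cdots s_1$ ($2\le k\le 8$), where $s_k=g_i$ for $k$ odd and $s_k=g_j$ for $k$ even; explicitly $c_1,\dots,c_8=1,\,g_i,\,g_jg_i,\,g_jz,\,z,\,g_iz,\,g_jg_iz,\,g_j$. *)

(* Defs.v *)
From mathcomp Require Import all_boot all_fingroup all_solvable.
Set Implicit Arguments. Unset Strict Implicit. Unset Printing Implicit Defensive.
Import GroupScope.
Local Open Scope group_scope.

Section Cayley.
Variable gT : finGroupType.

(* Adjacency in Cay(G,S): edges {x, s x} with s in S, i.e. y x^-1 \in S. *)
Definition cay_adj (S : {set gT}) (x y : gT) : bool := y * x^-1 \in S.

(* rho (a permutation of gT supported on the vertex set G) is an automorphism
   of Cay(G,S). *)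
Definition cay_aut (G S : {set gT}) (rho : {perm gT}) : bool :=
  perm_on G rho &&
  [forall x in G, forall y in G, cay_adj S (rho x) (rho y) == cay_adj S x y].

(* rho fixes the vertex 1 and every neighbour of 1 (N(1) = S):
   rho lies in A_1^{[1]}. *)
Definition fixes_1_and_nbrs (S : {set gT}) (rho : {perm gT}) : bool :=
  (rho 1 == 1) && [forall s in S, rho s == s].

Definition cyc_gen (gi gj : gT) (k : nat) : gT := if odd k then gi else gj.

(* c_1 = 1, c_k = s_{k-1} s_{k-2} ... s_1 for k >= 2 (c_0 is a dummy = 1). *)
Fixpoint cyc_vert (gi gj : gT) (k : nat) : gT :=
  match k with
  | 0 => 1
  | m.+1 => if m is 0%N then 1 else cyc_gen gi gj m * cyc_vert gi gj m
  end.

Definition cyc_labels (gi gj : gT) (rho : {perm gT}) : seq gT :=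
  [seq rho (cyc_vert gi gj (if k == 8 then 1 else k.+1)%N) *
       (rho (cyc_vert gi gj k))^-1 | k <- iota 1 8%N].

End Cayley.

(* Main.v *)
Require Import Defs.
From mathcomp Require Import all_boot all_fingroup all_solvable.
Import GroupScope.
Local Open Scope group_scope.
Set Implicit Arguments. Unset Strict Implicit. Unset Printing Implicit Defensive.

Section X.
Variable gT : finGroupType.
Implicit Types (S : {set gT}) (z : gT).

Definition Shyp S z :=
  [/\ forall s, s \in S -> s * s = 1,
      forall s t, s \in S -> t \in S -> s != t -> s * t = t * s * z,
      forall s, s \in S -> s * z = z * s
    & #[z] = 2%N].

Lemma Sh_inv S z : Shyp S z -> forall s, s \in S -> s^-1 = s.
Proof. by case=> H _ _ _ s sS; apply/eqP; rewrite eq_invg_mul H. Qed.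

Lemma Sh_z2 S z : Shyp S z -> z * z = 1.
Proof. by case=> _ _ _ oz; rewrite -expg2 -oz expg_order. Qed.

Lemma Sh_z1 S z : Shyp S z -> z != 1.
Proof. by case=> _ _ _ oz; rewrite -order_eq1 oz. Qed.

Lemma Sh_sts S z : Shyp S z -> forall s t, s \in S -> t \in S -> s != t ->
  s * t * s = t * z.
Proof.
move=> Sh s t sS tS st; have [H A Zc _] := Sh.
by rewrite (A s t) // -mulgA -Zc // mulgA -(mulgA t) (H s sS) mulg1.
Qed.

Lemma Sh_st1 S z : Shyp S z -> forall s t, s \in S -> t \in S -> s != t ->
  s * t != 1.
Proof.
move=> Sh s t sS tS st; apply: contra st => /eqP E.
have [H _ _ _] := Sh.
by rewrite -[s]mulg1 -(H t tS) mulgA E mul1g.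
Qed.

Lemma Sh_zSS S z : Shyp S z -> forall s t, s \in S -> t \in S -> z != s * t.
Proof.
move=> Sh s t sS tS; have [H A Zc _] := Sh.
have [->|st] := eqVneq s t; first by rewrite H //; exact: Sh_z1 Sh.
apply/eqP => E.
have E2 : t * s * z = 1 * z by rewrite mul1g -(A s t) // -E.
have ts : t != s by rewrite eq_sym.
by move: (Sh_st1 Sh tS sS ts); rewrite (mulIg _ _ _ E2) eqxx.
Qed.


Lemma Sh_case4 S z (Sh : Shyp S z) x1 x2 x3 x4 :
  x1 \in S -> x2 \in S -> x3 \in S -> x4 \in S ->
  x1 != x2 -> x2 != x3 -> x3 != x4 ->
  (forall s t, s \in S -> t \in S -> x1 * x2 * x3 * x4 != s * t) ->
  (forall s t, s \in S -> t \in S -> x1 * x2 * x3 * x4 != s * t * z) ->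
  uniq [:: x1; x2; x3; x4].
Proof.
move=> s1 s2 s3 s4 n12 n23 n34 N1 N2; have [H A Zc _] := Sh.
have [e13|n13] := eqVneq x1 x3.
  subst x3; have := N2 _ _ s2 s4.
  by rewrite (Sh_sts Sh s1 s2) // -mulgA -Zc // mulgA eqxx.
have [e24|n24] := eqVneq x2 x4.
  subst x4; have := N2 _ _ s1 s3.
  have -> : x1 * x2 * x3 * x2 = x1 * (x2 * x3 * x2) by rewrite !mulgA.
  by rewrite (Sh_sts Sh s2 s3) // mulgA eqxx.
have [e14|n14] := eqVneq x1 x4.
  subst x4; have := N1 _ _ s2 s3.
  rewrite -mulgA (A x3 x1) // 1?eq_sym // !mulgA (Sh_sts Sh s1 s2) //.
  by rewrite -(mulgA x2) -Zc // mulgA -mulgA (Sh_z2 Sh) mulg1 eqxx.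
by rewrite /= !inE !negb_or n12 n13 n14 n23 n24 n34.
Qed.

Lemma Sh_zP S z (Sh : Shyp S z) w :
  all (mem S) w -> z * foldr mulg 1 w = foldr mulg 1 w * z.
Proof.
have [H A Zc _] := Sh.
elim: w => [|t w IH] /=; first by rewrite mulg1 mul1g.
case/andP=> tS wS.
by rewrite mulgA -Zc // -mulgA IH // mulgA.
Qed.

Lemma Sh_conj S z (Sh : Shyp S z) w s :
  s \in S -> all (mem S) w ->
  s * foldr mulg 1 w = foldr mulg 1 w * s * z ^+ count (fun t => t != s) w.
Proof.
have [H A Zc _] := Sh.
move=> sS; elim: w => [|t w IH] /=; first by rewrite mulg1 mul1g expg0 mulg1.
case/andP=> tS wS.
have [ets|nts] := eqVneq t s.
  subst t; rewrite add0n {1}IH //; by rewrite !mulgA.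
rewrite add1n mulgA (A s t) // 1?eq_sym // -(mulgA (t * s)) (Sh_zP Sh) //.
by rewrite mulgA -(mulgA t s) IH // expgSr !mulgA.
Qed.


Lemma Sh_count S z (Sh : Shyp S z) (a : seq gT) :
  size a = 8%N -> all (mem S) a -> foldr mulg 1 a = 1 ->
  uniq (take 4 a) -> uniq (drop 4 a) ->
  forall s, s \in S -> s \in a -> count_mem s a = 2%N.
Proof.
move=> sz aS Pa u1 u2 s sS sa.
have E := Sh_conj Sh sS aS; rewrite Pa mulg1 mul1g in E.
have zn : z ^+ count (fun t => t != s) a = 1.
  by apply: (mulgI s); rewrite mulg1 -E.
have [_ _ _ oz] := Sh.
have dv : (2 %| count (fun t => t != s) a)%N by rewrite -oz order_dvdn zn.
have cp := count_predC (pred1 s) a.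
have ec : count (predC (pred1 s)) a = count (fun t => t != s) a by [].
rewrite ec sz in cp.
have pos : (0 < count_mem s a)%N by rewrite -has_count has_pred1.
rewrite -(cat_take_drop 4 a) count_cat !count_uniq_mem //.
move: pos; rewrite -{1}(cat_take_drop 4 a) count_cat !count_uniq_mem //.
move: cp dv; rewrite -{1}(cat_take_drop 4 a) count_cat !count_uniq_mem //.
case: (s \in take 4 a); case: (s \in drop 4 a) => //= cp.
all: by move/eqP: cp; rewrite ?add0n ?addn0 add1n eqSS => /eqP ->.
Qed.


Lemma Sh_bad S z (Sh : Shyp S z) u :
  u != z -> (forall s t, s \in S -> t \in S -> u != s * t) ->
  forall s t, s \in S -> t \in S -> u != s * t * z.
Proof.
have [H A Zc _] := Sh.
move=> uz N s t sS tS; have [est|nst] := eqVneq s t.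
  by subst t; rewrite H // mul1g.
have nts : t != s by rewrite eq_sym.
by rewrite -(A t s) //; apply: N.
Qed.

Lemma Sh_dist S z (Sh : Shyp S z) p q r :
  q * p^-1 \in S -> r * q^-1 = q * p^-1 -> r = p.
Proof.
have [H A Zc _] := Sh.
move=> qS E; have := H _ qS; rewrite -{1}E mulgA mulgKV => E2.
by apply/eqP; rewrite eq_mulgV1 E2.
Qed.

Lemma Sh_rev4 S z (Sh : Shyp S z) x1 x2 x3 x4 :
  x1 \in S -> x2 \in S -> x3 \in S -> x4 \in S ->
  x1 * x2 * x3 * x4 = (x4 * x3 * x2 * x1)^-1.
Proof.
move=> s1 s2 s3 s4.
by rewrite !invMg !(Sh_inv Sh s1, Sh_inv Sh s2, Sh_inv Sh s3, Sh_inv Sh s4) !mulgA.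
Qed.

Lemma Sh_core S z (Sh : Shyp S z) (u2 u3 u4 u5 u6 u7 u8 a1 a2 a3 a4 a5 a6 a7 a8 : gT) :
  a1 = u2 * 1^-1 -> a2 = u3 * u2^-1 -> a3 = u4 * u3^-1 -> a4 = u5 * u4^-1 ->
  a5 = u6 * u5^-1 -> a6 = u7 * u6^-1 -> a7 = u8 * u7^-1 -> a8 = 1 * u8^-1 ->
  all (mem S) [:: a1; a2; a3; a4; a5; a6; a7; a8] ->
  u3 != 1 -> u4 != u2 -> u5 != u3 -> u7 != u5 -> u8 != u6 -> u7 != 1 ->
  u5 != z -> (forall s t, s \in S -> t \in S -> u5 != s * t) ->
  let a := [:: a1; a2; a3; a4; a5; a6; a7; a8] in
  [/\ (forall s, s \in S -> s \in a -> count_mem s a = 2%N),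
      uniq (take 4 a) & uniq (drop 4 a)].
Proof.
move=> E1 E2 E3 E4 E5 E6 E7 E8 aS n31 n42 n53 n75 n86 n71 n5z N1 a.
have N2 := Sh_bad Sh n5z N1.
have sS' : forall x, x \in a -> x \in S by apply/allP.
have s1 : a1 \in S by apply: sS'; rewrite !inE eqxx ?orbT.
have s2 : a2 \in S by apply: sS'; rewrite !inE eqxx ?orbT.
have s3 : a3 \in S by apply: sS'; rewrite !inE eqxx ?orbT.
have s4 : a4 \in S by apply: sS'; rewrite !inE eqxx ?orbT.
have s5 : a5 \in S by apply: sS'; rewrite !inE eqxx ?orbT.
have s6 : a6 \in S by apply: sS'; rewrite !inE eqxx ?orbT.
have s7 : a7 \in S by apply: sS'; rewrite !inE eqxx ?orbT.
have s8 : a8 \in S by apply: sS'; rewrite !inE eqxx ?orbT.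
have d : forall p q r x y, x = q * p^-1 -> y = r * q^-1 -> x \in S -> r != p -> y != x.
  move=> p q r x y -> -> xS; apply: contra => /eqP E.
  by apply/eqP; apply: (Sh_dist Sh xS E).
have h1 : a4 * a3 * a2 * a1 = u5.
  by rewrite E1 E2 E3 E4 !mulgA !mulgKV invg1 mulg1.
have h2 : a8 * a7 * a6 * a5 = u5^-1.
  by rewrite E5 E6 E7 E8 !mulgA !mulgKV mul1g.
have h2' : a5 * a6 * a7 * a8 = u5 by rewrite (Sh_rev4 Sh) // h2 invgK.
have h1' : a1 * a2 * a3 * a4 = u5^-1 by rewrite (Sh_rev4 Sh) // h1.
have U1 : uniq [:: a4; a3; a2; a1].
  apply: (Sh_case4 Sh) => //.
  - by apply: (d u3 u4 u5) => //.
  - by apply: (d u2 u3 u4) => //.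
  - by apply: (d 1 u2 u3) => //.
  - by move=> s t sS tS; rewrite h1 N1.
  - by move=> s t sS tS; rewrite h1 N2.
have U2 : uniq [:: a5; a6; a7; a8].
  apply: (Sh_case4 Sh) => //.
  - by rewrite eq_sym; apply: (d u5 u6 u7) => //.
  - by rewrite eq_sym; apply: (d u6 u7 u8) => //.
  - by rewrite eq_sym; apply: (d u7 u8 1) => //; rewrite eq_sym.
  - by move=> s t sS tS; rewrite h2' N1.
  - by move=> s t sS tS; rewrite h2' N2.
have U1' : uniq (take 4 a) by rewrite -rev_uniq.
split => //; apply: (Sh_count Sh) => //.
have -> : foldr mulg 1 a = (a1 * a2 * a3 * a4) * (a5 * a6 * a7 * a8).
  by rewrite /= !mulgA mulg1.
by rewrite h1' h2' mulVg.
Qed.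

End X.

Theorem lemma4p6 (gT : finGroupType) (G : {group gT}) (r : nat) (z : gT)
    (g : 'I_(r.*2) -> gT) :
  (0 < r)%N ->
  (* G is extraspecial of order 2^(2r+1), Z(G) = <z> of order 2 *)
  #|G| = (2 ^ (r.*2).+1)%N ->
  'Z(G) = <[z]> -> #[z] = 2%N ->
  2.-abelem (G / 'Z(G)) ->
  (* {Z g_1, ..., Z g_2r} is a symmetric basis of G/Z *)
  (forall k, g k \in G) ->
  <<[set coset 'Z(G) (g k) | k : 'I_(r.*2)]>> = (G / 'Z(G))%g ->
  (forall k, g k ^+ 2 = 1) ->
  (forall k l, k != l -> g k * g l = g l * g k * z) ->
  forall (i j : 'I_(r.*2)), i != j ->
  forall rho : {perm gT},
    cay_aut G [set g k | k : 'I_(r.*2)] rho ->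
    fixes_1_and_nbrs [set g k | k : 'I_(r.*2)] rho ->
    rho z != z ->
    let a := cyc_labels (g i) (g j) rho in
    [/\ (forall s, s \in [set g k | k : 'I_(r.*2)] -> s \in a ->
           count_mem s a = 2%N),
        uniq (take 4 a)
      & uniq (drop 4 a)].
Proof.
move=> _ _ ZG oz _ gG _ g2 ganti i j ij rho caut fix1 rz a.
set S := [set g k | k : 'I_(r.*2)] in caut fix1 a *.
have zZ : z \in 'Z(G) by rewrite ZG cycle_id.
have [zG zcent] := centerP _ _ zZ.
have SG : forall s : gT, s \in S -> s \in G by move=> s /imsetP[k _ ->].
have Sh : Shyp S z.
  split => //.
  - by move=> s /imsetP[k _ ->]; rewrite -expg2 g2.
  - move=> s t /imsetP[k _ ->] /imsetP[l _ ->] st; apply: ganti.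
    by apply: contraNneq st => ->.
  - by move=> s sS; rewrite (zcent s (SG s sS)).
move/andP: fix1 => [/eqP r1 /forall_inP rS].
have rS' : forall s, s \in S -> rho s = s by move=> s /rS/eqP.
move/andP: caut => [_ /forall_inP adj0].
have adj : forall p q : gT, p \in G -> q \in G -> cay_adj S (rho p) (rho q) = cay_adj S p q.
  by move=> p q pG qG; move: (adj0 p pG) => /forall_inP/(_ q qG)/eqP.
set x := g i; set y := g j.
have xS : x \in S by apply: imset_f.
have yS : y \in S by apply: imset_f.
have xG := SG _ xS; have yG := SG _ yS.
have [H A Zc _] := Sh.
have xy : x != y.
  apply/eqP => E; have := ganti i j ij; rewrite -/x -/y E -{1}[y * y]mulg1.
  by move/mulgI/esym/eqP; rewrite (negbTE (Sh_z1 Sh)).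
have hc5 : y * (x * (y * x)) = z.
  by rewrite (mulgA x) (Sh_sts Sh xS yS xy) mulgA (H y yS) mul1g.
have hc8' : x * (y * (x * z)) = y.
  by rewrite !mulgA (Sh_sts Sh xS yS xy) -mulgA (Sh_z2 Sh) mulg1.
have hc8 : x * (y * (x * (y * (x * (y * x))))) = y.
  by rewrite hc5 hc8'.
have hp : forall p q c : gT, p * q != 1 -> p * (q * c) != c.
  move=> p q c pq; apply/eqP => E; move/eqP: pq; apply; apply: (mulIg c).
  by rewrite mul1g -mulgA E.
have xy1 := Sh_st1 Sh xS yS xy.
have yx1 : y * x != 1 by apply: (Sh_st1 Sh yS xS); rewrite eq_sym.
have rne : forall p q : gT, p != q -> rho p != rho q.
  by move=> p q; apply: contra => /eqP/perm_inj/eqP.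
have lab : forall p q s : gT, p \in G -> s \in S -> q = s * p -> rho q * (rho p)^-1 \in S.
  move=> p q s pG sS ->; have := adj p (s * p) pG (groupM (SG s sS) pG).
  by rewrite /cay_adj => ->; rewrite mulgK.
have u5n : forall s t : gT, s \in S -> t \in S -> rho z != s * t.
  move=> s t sS tS; apply/eqP => E.
  have := adj t z (SG t tS) zG; rewrite /cay_adj (rS' t tS) E mulgK sS => /esym zt.
  by move: (Sh_zSS Sh zt tS); rewrite mulgKV eqxx.
rewrite /a /cyc_labels /= /cyc_gen /= !mulg1 hc8 hc5.
have G3 : y * x \in G by rewrite groupM.
have G4 : x * (y * x) \in G by rewrite !groupM.
have G6 : x * z \in G by rewrite groupM.
have G7 : y * (x * z) \in G by rewrite !groupM.
apply: (@Sh_core _ S z Sh (rho x) (rho (y * x)) (rho (x * (y * x))) (rho z)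
   (rho (x * z)) (rho (y * (x * z))) (rho y)).
all: rewrite ?r1 //.
- rewrite /= -/x -/y; repeat (apply/andP; split) => //.
  + by rewrite -r1; apply: (lab 1 x x) => //; rewrite mulg1.
  + exact: (lab x (y * x) y).
  + exact: (lab (y * x) (x * (y * x)) x).
  + exact: (lab _ _ _ G4 yS (esym hc5)).
  + exact: (lab z (x * z) x).
  + exact: (lab (x * z) (y * (x * z)) y).
  + exact: (lab _ _ _ G7 xS (esym hc8')).
  + by rewrite -r1; exact: (lab _ _ _ yG yS (esym (H y yS))).
- by rewrite -r1; apply: rne.
- by apply: rne; apply: hp.
- by apply: rne; rewrite -{1}hc5; apply: hp.
- by apply: rne; apply: hp.
- by apply: rne; rewrite -{1}hc8'; apply: hp.
- rewrite -r1; apply: rne; apply/eqP => E; move: xy.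
  by rewrite -hc8' E mulg1 eqxx.
Qed.
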